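(* Let $d \geq 2$, $N, K \geq 1$ be integers, $\mathbf{y}_1,\ldots,\mathbf{y}_N \in \mathbb{R}^d$ with matrix $\mathbf{Y} = [\mathbf{y}_1,\ldots,\mathbf{y}_N] \in \mathbb{R}^{d\times N}$, and $\rho_k^{[i]} \geq 0$ with $\sum_{k=1}^K \rho_k^{[i]} = 1$ for each $i$. Put $\mathbf{A}_k = \sum_{i} \rho_k^{[i]}\mathbf{y}_i\mathbf{y}_i^\mathrm{T}$, $\gamma_k = \sum_i \rho_k^{[i]}$, and $\lambda_k = $ largest eigenvalue of $\mathbf{A}_k$. For $S \subseteq [K] = \{1,\ldots,K\}$ define \[ \sigma^2(S) = \frac{\|\mathbf{Y}\|_\mathrm{F}^2 - \sum_{k\in S}\lambda_k}{dN - \sum_{k\in S}\gamma_k},\qquad g(S) = \Big[dN - \sum_{k\in S}\gamma_k\Big]\ln \sigma^2(S) + \sum_{k\in S}\gamma_k \ln\frac{\lambda_k}{\gamma_k}, \] and assume that $\gamma_k > 0$, $\lambda_k > 0$ for all $k$ and $\sigma^2(S) > 0$ for all $S \subseteq [K]$. If $S \subseteq [K]$ and $j \in S$ satisfy $\sigma^2(S) \leq \lambda_j/\gamma_j$, then $g(S) \leq g(S \setminus \{j\})$.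
   Context: $\|\cdot\|_\mathrm{F}$ is the Frobenius norm; $\ln$ is the natural logarithm. *)

(* Defs.v *)
From HB Require Import structures.
From mathcomp Require Import all_boot all_order all_algebra.
From mathcomp Require Import all_classical all_reals all_analysis.
Set Implicit Arguments. Unset Strict Implicit. Unset Printing Implicit Defensive.
Import Order.TTheory GRing.Theory Num.Theory.
Local Open Scope ring_scope.

Definition frob2 (R : realType) (d N : nat) (Y : 'M[R]_(d, N)) : R :=
  \sum_(a < d) \sum_(b < N) Y a b ^+ 2.

Definition Amat (R : realType) (d N K : nat) (Y : 'M[R]_(d, N))
  (rho : 'I_N -> 'I_K -> R) (k : 'I_K) : 'M[R]_d :=
  \sum_(i < N) rho i k *: (col i Y *m (col i Y)^T).

Definition gam (R : realType) (N K : nat) (rho : 'I_N -> 'I_K -> R)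
  (k : 'I_K) : R := \sum_(i < N) rho i k.

Definition is_largest_eigenvalue (R : realType) (d : nat) (A : 'M[R]_d) (l : R) : Prop :=
  eigenvalue A l /\ (forall a : R, eigenvalue A a -> a <= l).

Definition sigma2 (R : realType) (d N K : nat) (Y : 'M[R]_(d, N))
  (gamma lam : 'I_K -> R) (S : {set 'I_K}) : R :=
  (frob2 Y - \sum_(k in S) lam k) / ((d * N)%:R - \sum_(k in S) gamma k).

Definition gfun (R : realType) (d N K : nat) (Y : 'M[R]_(d, N))
  (gamma lam : 'I_K -> R) (S : {set 'I_K}) : R :=
  ((d * N)%:R - \sum_(k in S) gamma k) * ln (sigma2 Y gamma lam S)
  + \sum_(k in S) gamma k * ln (lam k / gamma k).

(* Main.v *)
Require Import Defs.
From HB Require Import structures.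
From mathcomp Require Import all_boot all_order all_algebra.
From mathcomp Require Import all_classical all_reals all_analysis.
Import Order.TTheory GRing.Theory Num.Theory.
Local Open Scope ring_scope.
From mathcomp Require Import ring lra.

Lemma ln_le_sub1 {R : realType} {x : R} : 0 < x -> ln x <= x - 1.
Proof.
move=> hx. have := @le_ln1Dx R (x - 1). rewrite addrCA subrr addr0. apply. lra.
Qed.

Lemma key (R : realType) (D g F l : R) : 0 < D -> 0 < g -> 0 < F -> 0 < l ->
  D * ln (F / D) + g * ln (l / g) <= (D + g) * ln ((F + l) / (D + g)).
Proof.
move=> hD hg hF hl.
set m := (F + l) / (D + g).
have hm : 0 < m by rewrite /m divr_gt0 // addr_gt0.
have ha : 0 < F / D by rewrite divr_gt0.
have hb : 0 < l / g by rewrite divr_gt0.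
have e1 : ln (F / D) = ln m + ln (F / D / m).
  rewrite [ln (F / D / m)]ln_div ?posrE //. lra.
have e2 : ln (l / g) = ln m + ln (l / g / m).
  rewrite [ln (l / g / m)]ln_div ?posrE //. lra.
rewrite e1 e2.
have i1 := ln_le_sub1 (divr_gt0 ha hm).
have i2 := ln_le_sub1 (divr_gt0 hb hm).
have : D * (F / D / m - 1) + g * (l / g / m - 1) = 0.
  rewrite /m; field; apply/andP; split; rewrite ?gt_eqF ?addr_gt0 //.
have h1 : D * ln (F / D / m) <= D * (F / D / m - 1) by rewrite ler_pM2l.
have h2 : g * ln (l / g / m) <= g * (l / g / m - 1) by rewrite ler_pM2l.
lra.
Qed.

Theorem lemma3 (R : realType) (d N K : nat) (hd : (2 <= d)%N) (hN : (1 <= N)%N)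
  (hK : (1 <= K)%N) (Y : 'M[R]_(d, N)) (rho : 'I_N -> 'I_K -> R)
  (lam : 'I_K -> R)
  (hrho0 : forall i k, 0 <= rho i k)
  (hrho1 : forall i, \sum_(k < K) rho i k = 1)
  (hlam : forall k, is_largest_eigenvalue (Amat Y rho k) (lam k))
  (hgam_pos : forall k, 0 < gam rho k)
  (hlam_pos : forall k, 0 < lam k)
  (hsig_pos : forall S : {set 'I_K}, 0 < sigma2 Y (gam rho) lam S)
  (S : {set 'I_K}) (j : 'I_K) (hj : j \in S)
  (hS : sigma2 Y (gam rho) lam S <= lam j / gam rho j) :
  gfun Y (gam rho) lam S <= gfun Y (gam rho) lam (S :\ j).
Proof.
have tot : \sum_(k < K) gam rho k = N%:R.
  rewrite /gam exchange_big /= (eq_bigr (fun _ => 1)) => [|i _]; last exact: hrho1.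
  by rewrite sumr_const card_ord.
have sub : \sum_(k in S) gam rho k <= N%:R.
  rewrite -tot [X in _ <= X](bigID (fun k => k \in S)) /= lerDl.
  by apply: sumr_ge0 => k _; apply/ltW.
have hDN : (2 * N)%:R <= (d * N)%:R :> R by rewrite ler_nat leq_mul2r hd orbT.
have hN0 : 1 <= N%:R :> R by rewrite ler1n.
rewrite natrM in hDN.
have hD : 0 < (d * N)%:R - \sum_(k in S) gam rho k by lra.
have hsS := hsig_pos S.
have hF : 0 < frob2 Y - \sum_(k in S) lam k.
  by have := mulr_gt0 hsS hD; rewrite /sigma2 divfK // gt_eqF.
move: hD hF.
rewrite /gfun /sigma2 !(big_setD1 _ hj) /=.
set s1 := \sum_(k in S :\ j) gam rho k.
set s2 := \sum_(k in S :\ j) lam k.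
set s3 := \sum_(k in S :\ j) _.
set D := (d * N)%:R - (gam rho j + s1).
set F := frob2 Y - (lam j + s2).
move=> hD hF.
have eD : (d * N)%:R - s1 = D + gam rho j by rewrite /D; ring.
have eF : frob2 Y - s2 = F + lam j by rewrite /F; ring.
rewrite eD eF.
have := @key R _ _ _ _ hD (hgam_pos j) hF (hlam_pos j). move=> h. rewrite addrA lerD2r. exact: h.
Qed.
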